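(* Let $p>0$ and $m,n>\max(p+1,2)$ be integers. Then \begin{align*} \zeta_{G_{m,n,p}}(u)^{-1}=&-4u^{2m+2n-2p}+u^{2m+2n-4p}+2u^{m+2n-2p}+2u^{2m+n-2p}\\ &+u^{2n}+u^{2m}+2u^{m+n}-2u^{m+n-2p}-2u^{n}-2u^{m}+1. \end{align*}
   Context: For integers $p>0$ and $m,n>\max(p+1,2)$, $G_{m,n,p}$ is the graph obtained from a cycle $C_m$ and a cycle $C_n$ by identifying a path of $p$ consecutive edges of $C_m$ with a path of $p$ consecutive edges of $C_n$; equivalently, it consists of two distinct vertices joined by three internally disjoint paths of lengths $p$, $m-p$ and $n-p$. It has $m+n-p-1$ vertices and $m+n-p$ edges. For a finite connected graph $G$ with vertex set $V$, edge set $E$ and no vertex of degree $1$, let $r=|E|-|V|+1$, $\mathcal{A}$ the adjacency matrix, $\mathcal{Q}=D-I$ with $D$ the diagonal degree matrix; the reciprocal Ihara zeta function is $\zeta_G(u)^{-1}=(1-u^2)^{r-1}\det(I-\mathcal{A}u+\mathcal{Q}u^2)$. *)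

(* Defs.v *)
From HB Require Import structures.
From mathcomp Require Import all_boot all_order all_algebra.
Set Implicit Arguments. Unset Strict Implicit. Unset Printing Implicit Defensive.
Import Order.TTheory GRing.Theory Num.Theory.
Local Open Scope ring_scope.

(* A finite simple graph on 'I_N given by a (symmetric, irreflexive) relation. *)
Section Ihara.
Variables (N : nat) (e : rel 'I_N).

Definition edge_set : {set {set 'I_N}} :=
  [set [set x.1; x.2] | x in [set x : 'I_N * 'I_N | e x.1 x.2]].

Definition deg (i : 'I_N) : nat := #|[set j | e i j]|.

(* cyclomatic number r = |E| - |V| + 1 (as a nat; >= 1 for the graphs of interest) *)
Definition cyclo_rank : nat := (#|edge_set| + 1 - N)%N.

Definition adj_mx : 'M[{poly int}]_N := \matrix_(i, j) (e i j)%:R.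
Definition Q_mx : 'M[{poly int}]_N := \matrix_(i, j) ((i == j)%:R * ((deg i)%:R - 1)).

Definition ihara_recip : {poly int} :=
  (1 - 'X ^+ 2) ^+ (cyclo_rank.-1) *
  \det (1%:M - 'X *: adj_mx + 'X ^+ 2 *: Q_mx).
End Ihara.

(* G_{m,n,p}: vertices 0..m+n-p-2.  The cycle C_m is 0-1-...-(m-1)-0;
   the shared path of length p is 0-1-...-p; the remaining part of C_n is
   the path 0 - m - (m+1) - ... - (m+n-p-2) - p (n-p edges). *)
Definition Gmnp_e0 (m n p : nat) (i j : nat) : bool :=
  [|| ((i.+1 == j) && (j < m))%N,
      ((i == m.-1) && (j == 0))%N,
      ((i == 0) && (j == m))%N,
      ((m <= i) && (i.+1 == j) && (j <= m + n - p - 2))%N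
    | ((i == m + n - p - 2) && (j == p))%N].

Definition Gmnp (m n p : nat) : rel 'I_(m + n - p - 1) :=
  fun i j => Gmnp_e0 m n p i j || Gmnp_e0 m n p j i.
Arguments Gmnp m n p : clear implicits.
Arguments ihara_recip [N] e.

(* Main.v *)
Require Import Defs.
From HB Require Import structures.
From mathcomp Require Import all_boot all_order all_algebra zify ring lra.

Module PBase.
Import Order.TTheory GRing.Theory Num.Theory.
Local Open Scope ring_scope.
Set Implicit Arguments. Unset Strict Implicit. Unset Printing Implicit Defensive.

Definition mkM (R : Type) k (f : nat -> nat -> R) : 'M[R]_k := \matrix_(i < k, j < k) f i j.

Lemma schur_last (F : fieldType) k (f : nat -> nat -> F) : f k k != 0 ->
  \det (mkM k.+1 f) = f k k * \det (mkM k (fun i j => f i j - f i k * f k j / f k k)).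
Proof.
move=> nz.
set V : 'M[F]_k.+1 := \matrix_(i, j) (((j < k)%N && (i == k :> nat))%:R * (f k j / f k k)).
have dU : \det (1%:M - V) = 1.
  rewrite det_trig; last first.
    apply/is_trig_mxP => i j lij; rewrite !mxE.
    have /negPf -> : (i != j) by rewrite neq_ltn lij.
    have -> : (i == k :> nat) = false by apply/negP => /eqP E; have := ltn_ord j; lia.
    by rewrite andbF mul0r subr0.
  rewrite big1 // => i _; rewrite !mxE eqxx.
  have -> : ((i < k)%N && (i == k :> nat)) = false by apply/negP => /andP[/ltn_eqF ->].
  by rewrite mul0r subr0.
have PE : forall i j : 'I_k.+1, (mkM k.+1 f *m (1%:M - V)) i j =
   f i j - f i k * (((j < k)%N)%:R * (f k j / f k k)).
  move=> i j; rewrite mulmxBr mulmx1 !mxE (bigD1 ord_max) //= big1 ?addr0.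
    by rewrite !mxE eqxx andbT.
  move=> l /negPf nl; rewrite !mxE.
  have -> : (l == k :> nat) = false by move: nl => /negbT; apply: contraNF => /eqP E; apply/eqP/val_inj.
  by rewrite andbF mul0r mulr0.
have -> : \det (mkM k.+1 f) = \det (mkM k.+1 f *m (1%:M - V)) by rewrite det_mulmx dU mulr1.
rewrite (expand_det_row _ ord_max) (bigD1 ord_max) //= big1 ?addr0; last first.
  move=> j /negPf nj.
  have ljk : (j < k)%N.
    have := ltn_ord j; rewrite ltnS leq_eqVlt => /orP[/eqP E|//].
    have E' : j = ord_max by apply/val_inj.
    by rewrite E' eqxx in nj.
  rewrite PE ljk mul1r /=.
  have -> : f k k * (f k j / f k k) = f k j by rewrite mulrC divfK.
  by rewrite subrr mul0r.
rewrite [X in X * _]PE ltnn mul0r mulr0 subr0; congr (_ * _).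
rewrite /cofactor addnn -signr_odd odd_double expr0 mul1r.
congr (\det _); apply/matrixP => i j; rewrite [LHS]mxE [LHS]mxE PE [RHS]mxE /=.
have -> : bump k j = j by rewrite /bump leqNgt ltn_ord.
have -> : bump k i = i by rewrite /bump leqNgt ltn_ord.
by rewrite ltn_ord mul1r mulrA.
Qed.

Section Path.
Variable R : realFieldType.
Variable u : R.
Hypothesis u0 : 0 < u.
Hypothesis u1 : u < 1.

Definition Sf j := (1 - (u^+j)^+2) / (1 - u^+2).
Definition Smf j := (1 - (u^+j)^+2 / u^+2) / (1 - u^+2).
Definition Yf d j := d * Sf j - u^+2 * Smf j.
Definition cc := 1 + u^+2.

Lemma unz : u != 0. Proof. by rewrite gt_eqF. Qed.
Lemma u2nz : 1 - u^+2 != 0.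
Proof.
have h : u * u < 1 by move: u0 u1 => h0 h1; nra.
rewrite subr_eq0 eq_sym expr2; apply/negP => /eqP E. by rewrite E ltxx in h.
Qed.

Lemma Yf0 d : Yf d 0 = 1.
Proof. rewrite /Yf /Sf /Smf expr0 expr1n subrr mul0r mulr0 add0r. have := unz; have := u2nz. move=> h1 h2. field. by rewrite h1 h2. Qed.
Lemma Yf1 d : Yf d 1 = d.
Proof. rewrite /Yf /Sf /Smf expr1. have := unz; have := u2nz. move=> h1 h2. field. by rewrite h1 h2. Qed.
Lemma Sf1 : Sf 1 = 1.
Proof. rewrite /Sf expr1 divff //; exact: u2nz. Qed.

Lemma Yrec d j : d != 0 -> d * Yf (cc - u^+2/d) j = Yf d j.+1.
Proof.
move=> dn; rewrite /Yf /Sf /Smf /cc (exprS u j); have := unz; have := u2nz. move=> h1 h2.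
field. by rewrite ?dn ?h1 ?h2.
Qed.

Definition E1 (a b t k : nat) (w : R) (x y : nat) : R :=
  (x == a.+1)%:R * (y == b)%:R * (- u) + (x == k)%:R * (y == t)%:R * w.
Definition PS a b t (Rf : nat -> nat -> R) k d w (i j : nat) : R :=
  if (i <= a)%N && (j <= a)%N then Rf i j
  else if (a < i)%N && (a < j)%N then
    (if i == j then (if i == k then d else cc) else if (i == j.+1) || (j == i.+1) then - u else 0)
  else if (a < i)%N then E1 a b t k w i j else E1 a b t k w j i.
Definition Dl b t d w L (i j : nat) : R :=
  (i == b)%:R * (j == b)%:R * (- u^+2 * Yf d L.-1 / Yf d L)
  + (i == t)%:R * (j == t)%:R * (- w^+2 * Sf L / Yf d L)
  + ((i == b)%:R * (j == t)%:R + (i == t)%:R * (j == b)%:R) * (u^+L * w / Yf d L).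

Lemma PS_col a b t Rf k d w i : (a.+1 < k)%N -> (i < k)%N ->
  PS a b t Rf k d w i k = if (i <= a)%N then (i == t)%:R * w else (i == k.-1)%:R * (-u).
Proof.
move=> ak ik; rewrite /PS.
have -> : (k <= a)%N = false by apply/negbTE; rewrite -ltnNge; lia.
have -> : (a < k)%N by lia.
rewrite andbF andbT.
case: (leqP i a) => hi /=.
  rewrite /E1 eqxx mul1r.
  have -> : (k == a.+1) = false by apply/negbTE; apply/eqP; lia.
  by rewrite mul0r mul0r add0r.
rewrite ltn_eqF // (_ : (i == k.+1) = false); last by apply/negbTE; apply/eqP; lia.
case: (eqVneq i k.-1) => E /=.
  by rewrite E prednK ?eqxx ?mul1r //; lia.
have -> : (k == i.+1) = false by apply/negbTE; apply/eqP; lia.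
by rewrite mul0r.
Qed.

Lemma PS_row a b t Rf k d w j : (a.+1 < k)%N -> (j < k)%N ->
  PS a b t Rf k d w k j = if (j <= a)%N then (j == t)%:R * w else (j == k.-1)%:R * (-u).
Proof.
move=> ak jk; rewrite /PS.
have -> : (k <= a)%N = false by apply/negbTE; rewrite -ltnNge; lia.
have -> : (a < k)%N by lia.
rewrite /=.
case: (leqP j a) => hj /=.
  rewrite /E1 eqxx mul1r.
  have -> : (k == a.+1) = false by apply/negbTE; apply/eqP; lia.
  by rewrite mul0r mul0r add0r.
rewrite eq_sym ltn_eqF // (_ : (j == k.+1) = false); last by apply/negbTE; apply/eqP; lia.
case: (eqVneq j k.-1) => E /=.
  by rewrite E prednK ?eqxx ?orbT ?mul1r //; lia.
have -> : (k == j.+1) = false by apply/negbTE; apply/eqP; lia.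
by rewrite mul0r.
Qed.

Lemma PS_step a b t Rf k d w i j : (a.+1 < k)%N -> (i < k)%N -> (j < k)%N -> d != 0 ->
  PS a b t Rf k d w i j - PS a b t Rf k d w i k * PS a b t Rf k d w k j / d =
  PS a b t (fun i j => Rf i j + (i == t)%:R * (j == t)%:R * (- w^+2 / d)) k.-1 (cc - u^+2/d) (u * w / d) i j.
Proof.
move=> ak ik jk dn; rewrite PS_col // PS_row //.
rewrite /PS.
case: (leqP i a) => hi; case: (leqP j a) => hj /=.
- by rewrite /GRing.exp /=; ring.
- rewrite /E1 (ltn_eqF jk) /=; ring.
- rewrite /E1 (ltn_eqF ik) /=; ring.
have -> : (i == k) = false by rewrite ltn_eqF.
case: (eqVneq i j) => [<-|ij] /=.
  by case: (eqVneq i k.-1) => E /=; rewrite /GRing.exp /=; ring.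
case: (eqVneq i k.-1) => E; case: (eqVneq j k.-1) => E' //=; try (rewrite /GRing.exp /=; ring).
by move: ij; rewrite E E' eqxx.
Qed.

Lemma PS_base a b t Rf d w i j : (i <= a)%N -> (j <= a)%N -> d != 0 ->
  PS a b t Rf a.+1 d w i j - PS a b t Rf a.+1 d w i a.+1 * PS a b t Rf a.+1 d w a.+1 j / d =
  Rf i j + Dl b t d w 1 i j.
Proof.
move=> hi hj dn; rewrite /PS /Dl hi hj /= ?ltnn ?ltnSn ?leqnn /= ?andbF /= !ltnNge ?hi ?hj /= /E1 ?eqxx Yf0 Yf1 Sf1 /=.
rewrite /GRing.exp /=; field.
by [].
Qed.

Lemma PS_kk a b t Rf k d w : (a < k)%N -> PS a b t Rf k d w k k = d.
Proof. by move=> ak; rewrite /PS leqNgt ak /= eqxx. Qed.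

Lemma GPL a b t (hb : (b <= a)%N) (ht : (t <= a)%N) L : forall d w Rf, 1 <= d ->
  \det (mkM (a + L).+2 (PS a b t Rf (a + L).+1 d w)) =
    Yf d L.+1 * \det (mkM a.+1 (fun i j => Rf i j + Dl b t d w L.+1 i j))
  /\ 0 < Yf d L.+1.
Proof.
elim: L => [|L IH] d w Rf d1.
  have dn : d != 0 by rewrite gt_eqF // (lt_le_trans ltr01 d1).
  rewrite addn0 Yf1; split; last by rewrite (lt_le_trans ltr01 d1).
  rewrite schur_last PS_kk //; congr (_ * _); congr (\det _).
  by apply/matrixP => i j; rewrite !mxE PS_base // -ltnS.
have dn : d != 0 by rewrite gt_eqF // (lt_le_trans ltr01 d1).
have d'1 : 1 <= cc - u^+2 / d.
  rewrite /cc -addrA lerDl subr_ge0 ler_pdivrMr ?(lt_le_trans ltr01 d1) //.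
  rewrite ler_peMr // exprn_ge0 // ltW //.
have [IH1 IH2] := IH (cc - u^+2/d) (u * w / d) (fun i j => Rf i j + (i == t)%:R * (j == t)%:R * (- w^+2 / d)) d'1.
rewrite addnS schur_last PS_kk; last by lia.
rewrite -Yrec //; split; last by rewrite mulr_gt0 // (lt_le_trans ltr01 d1).
rewrite -mulrA; congr (_ * _).
have -> : mkM (a + L).+2 (fun i j => PS a b t Rf (a + L).+2 d w i j -
    PS a b t Rf (a + L).+2 d w i (a + L).+2 * PS a b t Rf (a + L).+2 d w (a + L).+2 j / d)
  = mkM (a + L).+2 (PS a b t (fun i j => Rf i j + (i == t)%:R * (j == t)%:R * (- w^+2 / d)) (a + L).+1 (cc - u^+2/d) (u * w / d)).
  by apply/matrixP => i j; rewrite !mxE PS_step //; lia.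
rewrite IH1; congr (_ * _); congr (\det _); apply/matrixP => i j; rewrite !mxE.
have d'n : cc - u^+2/d != 0 by rewrite gt_eqF // (lt_le_trans ltr01 d'1).
rewrite /Dl /= -(@Yrec d L.+1 dn) -(@Yrec d L dn).
have -> : Sf L.+2 = (d * Yf (cc - u ^+ 2 / d) L.+1 + u^+2 * Sf L.+1) / d.
  rewrite (@Yrec d L.+1 dn) /Yf /Smf /Sf (exprS u L.+1); have := unz; have := u2nz. move=> h1 h2.
  field. by rewrite ?dn ?h1 ?h2.
rewrite (exprS u L.+1).
have Y1n : Yf (cc - u ^+ 2 / d) L.+1 != 0 by rewrite gt_eqF.
move: (Yf (cc - u ^+ 2 / d) L.+1) (Yf (cc - u ^+ 2 / d) L) (u^+L.+1) Y1n => Y1 Y0 x Y1n.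
field. by rewrite ?dn ?Y1n.
all: try lia.
exact: dn.
Qed.
End Path.

End PBase.
Import PBase.

Module PGraph.
Import Order.TTheory GRing.Theory Num.Theory.
Local Open Scope ring_scope.
Set Implicit Arguments. Unset Strict Implicit. Unset Printing Implicit Defensive.

Ltac dec_atoms := repeat match goal with
 | |- context [ (?x <= ?y)%N ] =>
     first [ have -> : (x <= y)%N = true by lia | have -> : (x <= y)%N = false by lia ]
 | |- context [ (?x == ?y :> nat) ] =>
     first [ have -> : (x == y) = true by lia | have -> : (x == y) = false by lia ]
 end.
Ltac solve_ent := rewrite /=; dec_atoms; rewrite /=;
  repeat (first [ case: ifP => ? | case: eqP => ? ]; rewrite /=; dec_atoms; rewrite /=); try ring; try (exfalso; lia).

Section Graph.
Variables (R : realFieldType) (u : R) (m n p : nat).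
Hypotheses (u0 : 0 < u) (u1 : u < 1) (hp : (0 < p)%N) (hm : (p.+2 <= m)%N) (hn : (p.+2 <= n)%N).
Definition Gs (i j : nat) := Gmnp_e0 m n p i j || Gmnp_e0 m n p j i.
Definition M0 (i j : nat) : R := if i == j then (if (i == 0)%N || (i == p) then 1 + 2%:R * u^+2 else cc u)
   else if Gs i j then - u else 0.

Lemma ph1 i j : (i < m+n-p-1)%N -> (j < m+n-p-1)%N ->
  M0 i j = PS u (m.-1) 0%N p M0 (m+n-p-2)%N (cc u) (-u) i j.
Proof.
move=> hi hj; rewrite /PS.
case: (leqP i m.-1) => ia; case: (leqP j m.-1) => ja /=; first by [].
all: rewrite /M0 /Gs /Gmnp_e0 /E1 /cc.
all: solve_ent.
Qed.

Definition Rf1 (i j : nat) : R := M0 i j + Dl u 0%N p (cc u) (-u) (n-p-1)%N i j.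
Definition Rf2 (i j : nat) : R := Rf1 i j + Dl u p 0%N (cc u) (-u) (m-p-1)%N i j.

Lemma ph2 i j : (i < m)%N -> (j < m)%N -> Rf1 i j = PS u p p 0%N Rf1 m.-1 (cc u) (-u) i j.
Proof.
move=> hi hj; rewrite /PS.
case: (leqP i p) => ia; case: (leqP j p) => ja /=; first by [].
all: rewrite /Rf1 /Dl /M0 /Gs /Gmnp_e0 /E1 /cc.
all: solve_ent.
Qed.

Definition Wd : R := Dl u 0%N p (cc u) (-u) (n-p-1)%N p 0%N + Dl u p 0%N (cc u) (-u) (m-p-1)%N p 0%N.

Lemma ph3 i j : (i <= p)%N -> (j <= p)%N -> Rf2 i j = PS u 0%N 0%N 0%N Rf2 p (Rf2 p p) Wd i j.
Proof.
move=> hi hj; rewrite /PS.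
case: (leqP i 0) => ia; case: (leqP j 0) => ja /=; first by [].
all: rewrite /Wd /Rf2 /Rf1 /Dl /M0 /Gs /Gmnp_e0 /E1 /cc.
all: solve_ent.
Qed.

Lemma det_phase1 : \det (mkM (m+n-p-1) M0) = Yf u (cc u) (n-p-1) * \det (mkM m Rf1).
Proof.
have E : (m+n-p-1 = (m.-1 + (n-p-2)).+2)%N by lia.
rewrite E.
have -> : mkM (m.-1 + (n-p-2)).+2 M0 = mkM (m.-1 + (n-p-2)).+2 (PS u (m.-1) 0%N p M0 (m.-1 + (n-p-2)).+1 (cc u) (-u)).
  apply/matrixP => i j; rewrite !mxE.
  rewrite ph1; try (rewrite E; exact: ltn_ord).
  by have -> : (m+n-p-2 = (m.-1 + (n-p-2)).+1)%N by lia.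
have d1 : 1 <= cc u by rewrite /cc lerDl exprn_ge0 // ltW.
have hpm : (p <= m.-1)%N by lia.
have [-> _] := GPL u0 u1 (leq0n _) hpm (n-p-2) (-u) M0 d1.
have -> : ((n-p-2).+1 = n-p-1)%N by lia.
rewrite prednK; last by lia.
by [].
Qed.

Lemma det_phase2 : \det (mkM m Rf1) = Yf u (cc u) (m-p-1) * \det (mkM p.+1 Rf2).
Proof.
have E : (m = (p + (m-p-2)).+2)%N by lia.
rewrite [in LHS]E.
have -> : mkM (p + (m-p-2)).+2 Rf1 = mkM (p + (m-p-2)).+2 (PS u p p 0%N Rf1 (p + (m-p-2)).+1 (cc u) (-u)).
  apply/matrixP => i j; rewrite !mxE.
  have hi : (i < m)%N by apply: (leq_trans (ltn_ord i)); lia.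
  have hj : (j < m)%N by apply: (leq_trans (ltn_ord j)); lia.
  rewrite ph2 //.
  by have -> : (m.-1 = (p + (m-p-2)).+1)%N by lia.
have d1 : 1 <= cc u by rewrite /cc lerDl exprn_ge0 // ltW.
have [-> _] := GPL u0 u1 (leqnn p) (leq0n p) (m-p-2) (-u) Rf1 d1.
have -> : ((m-p-2).+1 = m-p-1)%N by lia.
by [].
Qed.

Lemma det_phase3 : 1 <= Rf2 p p ->
  \det (mkM p.+1 Rf2) = Yf u (Rf2 p p) p * (Rf2 0%N 0%N + Dl u 0%N 0%N (Rf2 p p) Wd p 0%N 0%N).
Proof.
move=> D1.
have E : (p.+1 = (0 + p.-1).+2)%N by lia.
rewrite E.
have -> : mkM (0 + p.-1).+2 Rf2 = mkM (0 + p.-1).+2 (PS u 0%N 0%N 0%N Rf2 (0 + p.-1).+1 (Rf2 p p) Wd).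
  apply/matrixP => i j; rewrite !mxE.
  have hi : (i <= p)%N by rewrite -ltnS; apply: (leq_trans (ltn_ord i)); lia.
  have hj : (j <= p)%N by rewrite -ltnS; apply: (leq_trans (ltn_ord j)); lia.
  rewrite ph3 //.
  congr (PS _ _ _ _ _ _ _ _ _ _); lia.
have [-> _] := GPL u0 u1 (leqnn 0) (leqnn 0) p.-1 Wd Rf2 D1.
rewrite prednK //; congr (_ * _).
by rewrite det_mx11 mxE.
Qed.

Lemma Ycc j : Yf u (cc u) j = Sf u j.+1.
Proof. rewrite /Yf /Sf /Smf /cc (exprS u j); have := unz u0; have := u2nz u0 u1. move=> h1 h2.
field. by rewrite ?h1 ?h2. Qed.
Lemma SfS j : Sf u j.+1 = Sf u j + (u^+j)^+2.
Proof. rewrite /Sf (exprS u j); have := unz u0; have := u2nz u0 u1. move=> h1 h2.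
field. by rewrite ?h1 ?h2. Qed.
Lemma Sf_ge0 j : 0 <= Sf u j.
Proof.
rewrite /Sf divr_ge0 // subr_ge0.
  by rewrite exprn_ile1 // ?exprn_ge0 ?exprn_ile1 // ltW.
by rewrite expr2; apply: ltW; move: u0 u1 => h0 h1; nra.
Qed.
Lemma Sf_gt0 j : 0 < Sf u j.+1.
Proof. rewrite SfS; apply: ltr_wpDl; first exact: Sf_ge0. by rewrite exprn_gt0 // exprn_gt0. Qed.
Lemma Sf_rat j : Sf u j / Sf u j.+1 <= 1.
Proof.
rewrite ler_pdivrMr; last exact: Sf_gt0.
rewrite mul1r SfS lerDl; apply: exprn_ge0; apply: exprn_ge0; exact: ltW.
Qed.

Lemma D1 : 1 <= Rf2 p p.
Proof.
rewrite /Rf2 /Rf1 /Dl /M0 eqxx orbT.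
have -> : (p == 0%N) = false by lia.
rewrite /= !Ycc.
have -> : ((m - p - 1).-1.+1 = m-p-1)%N by lia.
have h1 := Sf_rat (n-p-1); have h2 := Sf_rat (m-p-1).
have h3 : 0 <= u^+2 by rewrite exprn_ge0 // ltW.
have -> : ((n - p - 1).-1.+1 = n-p-1)%N by lia.
rewrite sqrrN.
move: h1 h2 h3; set r1 := Sf u (n - p - 1) / _; set r2 := Sf u (m - p - 1) / _; set q := u^+2.
move=> h1 h2 h3.
have -> : - q * Sf u (n - p - 1) / Sf u (n - p - 1).+1 = - q * r1 by rewrite /r1 mulrA.
have -> : - q * Sf u (m - p - 1) / Sf u (m - p - 1).+1 = - q * r2 by rewrite /r2 mulrA.
nra.
Qed.
End Graph.

End PGraph.
Import PGraph.

Module PFin.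
Import Order.TTheory GRing.Theory Num.Theory.
Local Open Scope ring_scope.
Set Implicit Arguments. Unset Strict Implicit. Unset Printing Implicit Defensive.

Section Fin.
Variables (R : realFieldType) (u : R) (m n p : nat).
Hypotheses (u0 : 0 < u) (u1 : u < 1) (hp : (0 < p)%N) (hm : (p.+2 <= m)%N) (hn : (p.+2 <= n)%N).

Definition RHSu : R :=
    - 4%:R * u ^+ (2 * m + 2 * n - 2 * p) + u ^+ (2 * m + 2 * n - 4 * p)
    + 2%:R * u ^+ (m + 2 * n - 2 * p) + 2%:R * u ^+ (2 * m + n - 2 * p)
    + u ^+ (2 * n) + u ^+ (2 * m) + 2%:R * u ^+ (m + n)
    - 2%:R * u ^+ (m + n - 2 * p) - 2%:R * u ^+ n - 2%:R * u ^+ m + 1.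

Lemma fin_alg : (1 - u^+2) * (Yf u (cc u) (n-p-1) * (Yf u (cc u) (m-p-1) *
   (Yf u (Rf2 u m n p p p) p * (Rf2 u m n p 0%N 0%N + Dl u 0%N 0%N (Rf2 u m n p p p) (Wd u m n p) p 0%N 0%N)))) = RHSu.
Proof.
have Hy : Yf u (Rf2 u m n p p p) p != 0.
  have D1' := D1 u0 u1 hp hm hn.
  have [_ H] := GPL u0 u1 (leqnn 0) (leqnn 0) p.-1 (Wd u m n p) (Rf2 u m n p) D1'.
  by rewrite prednK // in H; rewrite gt_eqF.
have Ey : Yf u (Rf2 u m n p p p) p * (Rf2 u m n p 0%N 0%N + Dl u 0%N 0%N (Rf2 u m n p p p) (Wd u m n p) p 0%N 0%N)
   = Yf u (Rf2 u m n p p p) p * Rf2 u m n p 0%N 0%N - u^+2 * Yf u (Rf2 u m n p p p) p.-1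
     - (Wd u m n p)^+2 * Sf u p + 2%:R * u^+p * Wd u m n p.
  rewrite /Dl eqxx /=; move: (Yf u (Rf2 u m n p p p) p) Hy => Y Hy; field; by [].
rewrite Ey.
have [P EP] : exists P, p = P.+1 by exists p.-1; lia.
have [A2 E2] : exists A2, m = (P.+1 + A2.+2)%N by exists (m - p - 2)%N; lia.
have [A3 E3] : exists A3, n = (P.+1 + A3.+2)%N by exists (n - p - 2)%N; lia.
rewrite /Wd /Rf2 /Rf1 /Dl /M0 /RHSu !eqxx.
have -> : (p == 0%N) = false by lia.
have -> : (0%N == p) = false by lia.
rewrite /= !Ycc.
have -> : (n - p - 1 = A3.+1)%N by lia.
have -> : (m - p - 1 = A2.+1)%N by lia.
have -> : (2 * m + 2 * n - 2 * p = P+P+A2+A2+A3+A3+10)%N by lia.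
have -> : (2 * m + 2 * n - 4 * p = A2+A2+A3+A3+8)%N by lia.
have -> : (m + 2 * n - 2 * p = P+A2+A3+A3+7)%N by lia.
have -> : (2 * m + n - 2 * p = P+A2+A2+A3+7)%N by lia.
have -> : (2 * n = P+P+A3+A3+6)%N by lia.
have -> : (2 * m = P+P+A2+A2+6)%N by lia.
have -> : (m + n - 2 * p = A2+A3+4)%N by lia.
have -> : (m + n = P+P+A2+A3+6)%N by lia.
rewrite E2 E3 EP /=.
have -> : (P.+1 + A2.+2 = P+A2+3)%N by lia.
have -> : (P.+1 + A3.+2 = P+A3+3)%N by lia.
have hS3 : Sf u A3.+2 != 0 by rewrite gt_eqF // Sf_gt0.
have hS2 : Sf u A2.+2 != 0 by rewrite gt_eqF // Sf_gt0.
have h1 := u2nz u0 u1.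
have h2 := unz u0.
rewrite /Yf /Sf /Smf !exprD !exprS in hS3 hS2 h1 *.
move: hS3 hS2; rewrite !mulf_eq0 !negb_or => /andP[hS3 _] /andP[hS2 _].
rewrite !expr0 !mulr1 in hS3 hS2 h1.
move: (u^+P) (u^+A2) (u^+A3) hS3 hS2 => x y z hS3 hS2.
field.
by rewrite h1 hS2 hS3 h2.
all: by [].
Qed.
End Fin.

End PFin.
Import PFin.

Module PComb.
Set Implicit Arguments. Unset Strict Implicit. Unset Printing Implicit Defensive.

Ltac dec_atoms := repeat match goal with
 | |- context [ (?x <= ?y)%N ] =>
     first [ have -> : (x <= y)%N = true by lia | have -> : (x <= y)%N = false by lia ]
 | |- context [ (?x == ?y :> nat) ] =>
     first [ have -> : (x == y) = true by lia | have -> : (x == y) = false by lia ]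
 end.
Ltac bsolve := rewrite /=; dec_atoms; rewrite /=;
  repeat (first [ case: ifP => ? | case: eqP => ? | case: leqP => ?]; rewrite /=; dec_atoms; rewrite /=);
  try done; try (exfalso; lia).

Section Nb.
Variables (m n p : nat).
Hypotheses (hp : (0 < p)%N) (hm : (p.+2 <= m)%N) (hn : (p.+2 <= n)%N).
Definition nbA i := if i == 0 then 1 else if i == m then 0 else i.-1.
Definition nbB i := if i == 0 then m.-1 else if i == m.-1 then 0 else if i == (m+n-p-2) then p else i.+1.
Definition nbC i := if i == 0 then m else (m+n-p-2).
Definition NB i j := (j == nbA i) || (j == nbB i) || (((i == 0) || (i == p)) && (j == nbC i)).
Lemma GsNB i j : i < m+n-p-1 -> j < m+n-p-1 -> Gs m n p i j = NB i j.
Proof. move=> hi hj; rewrite /Gs /Gmnp_e0 /NB /nbA /nbB /nbC. bsolve. Qed.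

Lemma nb_props i : i < m+n-p-1 ->
  [&& nbA i < m+n-p-1, nbB i < m+n-p-1, nbA i != nbB i &
    ((i == 0) || (i == p)) ==> [&& nbC i < m+n-p-1, nbC i != nbA i & nbC i != nbB i]].
Proof. move=> hi; rewrite /nbA /nbB /nbC. bsolve. Qed.

Definition lo k := if k < m.-1 then k else if k == m.-1 then 0 else if k == m then 0
   else if k < m+n-p-1 then k.-1 else p.
Definition hi k := if k < m.-1 then k.+1 else if k == m.-1 then m.-1 else if k == m then m
   else if k < m+n-p-1 then k else (m+n-p-2).
Definition kk x y := if y < m then (if (x == 0) && (y == m.-1) then m.-1 else x)
  else if x == 0 then m else if x == p then (m+n-p-1) else y.

Lemma lohi_ok k : k <= m+n-p-1 -> (lo k < hi k) && (hi k < m+n-p-1) && Gs m n p (lo k) (hi k).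
Proof. move=> hk; rewrite /lo /hi /Gs /Gmnp_e0. bsolve. Qed.

Lemma kk_ok x y : x < y -> y < m+n-p-1 -> Gs m n p x y ==>
  [&& kk x y <= m+n-p-1, lo (kk x y) == x & hi (kk x y) == y].
Proof. move=> hx hy; rewrite /kk /lo /hi /Gs /Gmnp_e0. bsolve. Qed.

Lemma lohi_inj k k' : k <= m+n-p-1 -> k' <= m+n-p-1 -> lo k = lo k' -> hi k = hi k' -> k = k'.
Proof.
move=> hk hk' E1 E2; apply/eqP; move: E1 E2; rewrite /lo /hi.
repeat (case: ifP => ?); move=> *; lia.
Qed.

Lemma Gs_irr i : Gs m n p i i = false.
Proof. rewrite /Gs /Gmnp_e0; apply/negbTE; apply/negP => H; lia. Qed.
Lemma Gs_sym i j : Gs m n p i j = Gs m n p j i.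
Proof. by rewrite /Gs orbC. Qed.
End Nb.

Lemma card2 N (a b : nat) (ha : a < N) (hb : b < N) : a != b ->
  #|[set j : 'I_N | (j == a :> nat) || (j == b :> nat)]| = 2.
Proof.
move=> ab.
have -> : [set j : 'I_N | (j == a :> nat) || (j == b :> nat)] = [set Ordinal ha; Ordinal hb].
  by apply/setP => j; rewrite !inE -!val_eqE.
by rewrite cards2 -val_eqE /= ab.
Qed.

Lemma card3 N (a b c : nat) (ha : a < N) (hb : b < N) (hc : c < N) : a != b -> c != a -> c != b ->
  #|[set j : 'I_N | (j == a :> nat) || (j == b :> nat) || (j == c :> nat)]| = 3.
Proof.
move=> ab ca cb.
have -> : [set j : 'I_N | (j == a :> nat) || (j == b :> nat) || (j == c :> nat)] = Ordinal hc |: [set Ordinal ha; Ordinal hb].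
  by apply/setP => j; rewrite !inE -!val_eqE /= orbC.
rewrite cardsU1 cards2 !inE -!val_eqE /= ab.
by rewrite (negbTE ca) (negbTE cb).
Qed.

Lemma deg_eq m n p (hp : (0 < p)%N) (hm : (p.+2 <= m)%N) (hn : (p.+2 <= n)%N) (i : 'I_(m+n-p-1)) :
  deg (Gmnp m n p) i = if (i == 0 :> nat) || (i == p :> nat) then 3 else 2.
Proof.
rewrite /deg.
have E : [set j | Gmnp m n p i j] = [set j : 'I_(m+n-p-1) | NB m n p i j].
  by apply/setP => j; rewrite !inE /Gmnp -/(Gs m n p i j) GsNB.
rewrite E /NB.
have := nb_props hp hm hn (ltn_ord i).
case/and4P => hA hB AB; case: ifP => H /=.
  case/and3P => hC CA CB.
  by rewrite (card3 hA hB hC).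
move=> _.
have -> : [set j : 'I_(m+n-p-1) | (j == nbA m i :> nat) || (j == nbB m n p i :> nat) || false]
  = [set j : 'I_(m+n-p-1) | (j == nbA m i :> nat) || (j == nbB m n p i :> nat)].
  by apply/setP => j; rewrite !inE orbF.
by rewrite (card2 hA hB).
Qed.


Section Edges.
Variables (m n p : nat).
Hypotheses (hp : (0 < p)%N) (hm : (p.+2 <= m)%N) (hn : (p.+2 <= n)%N).
Local Notation N := (m+n-p-1)%N.

Lemma N_gt0 : (0 < N)%N. Proof. lia. Qed.
Definition i0 : 'I_N := Ordinal N_gt0.
Definition fe (k : 'I_N.+1) : {set 'I_N} := [set insubd i0 (lo m n p k); insubd i0 (hi m n p k)].

Lemma fe_val (k : 'I_N.+1) :
  val (insubd i0 (lo m n p k)) = lo m n p k /\ val (insubd i0 (hi m n p k)) = hi m n p k.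
Proof.
have /andP[/andP[h1 h2] _] := lohi_ok hp hm hn (ltn_ord k).
have hl : lo m n p k < N by apply: ltn_trans h1 h2.
by split; rewrite insubdK.
Qed.

Lemma fe_inj : injective fe.
Proof.
move=> k k' E.
have [a1 b1] := fe_val k; have [a2 b2] := fe_val k'.
have /andP[/andP[l1 _] _] := lohi_ok hp hm hn (ltn_ord k).
have /andP[/andP[l2 _] _] := lohi_ok hp hm hn (ltn_ord k').
have H1 : insubd i0 (lo m n p k) \in fe k' by rewrite -E !inE eqxx.
have H2 : insubd i0 (hi m n p k) \in fe k' by rewrite -E !inE eqxx orbT.
have H3 : insubd i0 (lo m n p k') \in fe k by rewrite E !inE eqxx.
have H4 : insubd i0 (hi m n p k') \in fe k by rewrite E !inE eqxx orbT.
move: H1 H2 H3 H4; rewrite !inE -!val_eqE a1 b1 a2 b2 => H1 H2 H3 H4.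
apply/val_inj/(lohi_inj hp hm hn (ltn_ord k) (ltn_ord k')); lia.
Qed.

Lemma edge_card : #|edge_set (Gmnp m n p)| = N.+1.
Proof.
have -> : edge_set (Gmnp m n p) = fe @: setT.
  apply/setP => S; apply/imsetP/imsetP.
    case=> x; rewrite inE => Hx ->.
    have Hs : Gs m n p x.1 x.2 by [].
    have nx : (x.1 : nat) != x.2 by apply/eqP => E; rewrite E Gs_irr in Hs.
    case: (ltngtP x.1 x.2) nx => // Hl _.
      have /and3P[k1 k2 k3] := implyP (kk_ok hp hm hn Hl (ltn_ord x.2)) Hs.
      exists (Ordinal (k1 : kk m n p x.1 x.2 < N.+1)) => //.
      rewrite /fe /= (eqP k2) (eqP k3) !valKd.
      by [].
    rewrite Gs_sym in Hs.
    have /and3P[k1 k2 k3] := implyP (kk_ok hp hm hn Hl (ltn_ord x.1)) Hs.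
    exists (Ordinal (k1 : kk m n p x.2 x.1 < N.+1)) => //.
    by rewrite /fe /= (eqP k2) (eqP k3) !valKd setUC.
  case=> k _ ->.
  exists (insubd i0 (lo m n p k), insubd i0 (hi m n p k)) => //.
  rewrite inE /=.
  have [a1 b1] := fe_val k.
  have /andP[_ H] := lohi_ok hp hm hn (ltn_ord k).
  by rewrite /Gmnp a1 b1.
by rewrite card_imset ?cardsT ?card_ord //; apply: fe_inj.
Qed.
End Edges.

End PComb.
Import PComb.

Module PMain.
Import Order.TTheory GRing.Theory Num.Theory.
Local Open Scope ring_scope.
Set Implicit Arguments. Unset Strict Implicit. Unset Printing Implicit Defensive.

Lemma field_main (R : realFieldType) (u : R) m n p : 0 < u -> u < 1 ->
  (0 < p)%N -> (p.+2 <= m)%N -> (p.+2 <= n)%N ->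
  (1 - u^+2) * \det (mkM (m+n-p-1) (M0 u m n p)) = RHSu u m n p.
Proof.
move=> u0 u1 hp hm hn.
rewrite (det_phase1 u0 u1 hp hm hn) (det_phase2 u0 u1 hp hm hn) (det_phase3 u0 u1 hp hm hn (D1 u0 u1 hp hm hn)).
exact: fin_alg.
Qed.

Lemma roots_zero (P : {poly rat}) : (forall x : rat, 0 < x -> x < 1 -> P.[x] = 0) -> P = 0.
Proof.
move=> H; apply/eqP; apply/negPn/negP => nz.
set rs := [seq ((k.+2)%:R : rat)^-1 | k <- iota 0 (size P)].
have Hall : all (root P) rs.
  apply/allP => x /mapP [k _ ->]; apply/rootP; apply: H.
    by rewrite invr_gt0 ltr0n.
  by rewrite invf_lt1 ?ltr0n // ltr1n.
have Hu : uniq rs.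
  by rewrite map_inj_uniq ?iota_uniq // => a b /invr_inj /eqP; rewrite eqr_nat => /eqP [].
have := max_poly_roots nz Hall Hu.
by rewrite size_map size_iota ltnn.
Qed.


End PMain.
Import PMain.

Import GRing.Theory Num.Theory.
Local Open Scope ring_scope.

Theorem mainTheorem6 (m n p : nat) :
  (0 < p)%N -> (maxn p.+1 2 < m)%N -> (maxn p.+1 2 < n)%N ->
  ihara_recip (Gmnp m n p) =
    - 4%:R * 'X ^+ (2 * m + 2 * n - 2 * p) + 'X ^+ (2 * m + 2 * n - 4 * p)
    + 2%:R * 'X ^+ (m + 2 * n - 2 * p) + 2%:R * 'X ^+ (2 * m + n - 2 * p)
    + 'X ^+ (2 * n) + 'X ^+ (2 * m) + 2%:R * 'X ^+ (m + n)
    - 2%:R * 'X ^+ (m + n - 2 * p) - 2%:R * 'X ^+ n - 2%:R * 'X ^+ m + 1 :> {poly int}.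
Proof.
move=> hp; rewrite !gtn_max => /andP[hm _] /andP[hn _].
apply: (@map_inj_poly _ _ (intr : int -> rat)); [exact: intr_inj | by rewrite rmorph0 |].
apply/eqP; rewrite -subr_eq0; apply/eqP; apply: roots_zero => x x0 x1.
rewrite hornerD hornerN; apply/eqP; rewrite subr_eq0; apply/eqP.
set e1 := (2 * m + 2 * n - 2 * p)%N. set e2 := (2 * m + 2 * n - 4 * p)%N.
set e3 := (m + 2 * n - 2 * p)%N. set e4 := (2 * m + n - 2 * p)%N.
set e5 := (2 * n)%N. set e6 := (2 * m)%N. set e8 := (m + n - 2 * p)%N. set e7 := (m + n)%N.
rewrite /ihara_recip /cyclo_rank edge_card //.
have -> : (((m + n - p - 1).+1 + 1 - (m + n - p - 1)).-1 = 1)%N by lia.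
rewrite expr1 rmorphM -det_map_mx /= hornerM.
rewrite -[X in _ * X = _]/(horner_eval x _) -det_map_mx.
have -> : (((1%:M - 'X *: adj_mx (Gmnp m n p) + 'X^2 *: Q_mx (Gmnp m n p))
         ^ map_poly intr)%sesqui ^ horner_eval x)%sesqui = mkM (m+n-p-1) (M0 x m n p).
  apply/matrixP => i j; rewrite !mxE.
  rewrite horner_evalE !(rmorphB, rmorphD, rmorphM, rmorphN, rmorphXn, rmorph1, rmorph_nat) /= !map_polyX !hornerE.
  rewrite (deg_eq hp hm hn) /M0 -/(Gs m n p i j).
  case: (eqVneq i j) => [<-|ij].
    rewrite eqxx (_ : Gmnp m n p i i = false); last exact: Gs_irr.
    rewrite !hornerMn hornerE.
    case: ifP => _; rewrite /cc /=; ring.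
  have -> : (val i == val j) = false by apply/negbTE; rewrite val_eqE.
  rewrite !hornerMn hornerE.
  change (Gmnp m n p i j) with (Gs m n p i j).
  have h1 : (1 : {poly rat}).[x] = 1 by rewrite -polyC1 hornerC.
  case: (Gs m n p i j) => /=; rewrite !h1 !mulr0n ?mulr1n !(mulr0, mul0r, addr0, mulr1, oppr0, add0r) //.
have -> : (map_poly intr (1 - 'X^2 : {poly int})).[x] = 1 - x^+2 :> rat.
  by rewrite rmorphB rmorph1 rmorphXn /= map_polyX !hornerE.
rewrite (field_main x0 x1 hp hm hn) /RHSu.
rewrite -/e1 -/e2 -/e3 -/e4 -/e5 -/e6 -/e7 -/e8.
rewrite !(rmorphB, rmorphD, rmorphM, rmorphN, rmorphXn, rmorph1, rmorph_nat) /= !map_polyX !hornerE.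
by [].
Qed.
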